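(* Let $K\subseteq\mathbb R^2$ be a compact set containing no array on three points. For each $l\in\mathbb N$ and each $\alpha>0$ there exists $n_0\in\mathbb N$ such that for all $n\ge n_0$ the following holds: if $u_0u_1\ldots u_k$ is a path in the graph $\Gamma^n$ such that $|p(u_0)-p(u_1)|\ge\alpha$ and $|q(u_{k-1})-q(u_k)|\ge\alpha$, then $k>l$.
   Context: An array on three points is a triple $a_1,a_2,a_3$ of points in the plane with $a_1\ne a_2$, $a_2\ne a_3$, such that the segments $[a_1;a_2]$ and $[a_2;a_3]$ are each parallel to a coordinate axis and are mutually orthogonal. Let $p,q:\mathbb R^2\to\mathbb R$ be $p(x,y)=x$, $q(x,y)=y$. For $n\in\mathbb N$ the graph $\Gamma^n$ is defined as follows: its vertex set $V(\Gamma^n)$ consists of all lattice points $(i/2^n,j/2^n)$, $i,j\in\mathbb Z$, such that the square $[i/2^n;(i+1)/2^n)\times[j/2^n;(j+1)/2^n)$ meets $K$; its edges are all two-element sets $\{u_1,u_2\}$ of vertices with $|p(u_1)-p(u_2)|\le 1/2^n$ or $|q(u_1)-q(u_2)|\le 1/2^n$. A path of length $k$ is a sequence $u_0,u_1,\dots,u_k$ of pairwise distinct vertices such that each two consecutive ones form an edge. *)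

(* Defs.v *)
From HB Require Import structures.
From mathcomp Require Import all_boot all_order all_algebra.
From mathcomp Require Import all_classical all_reals all_analysis.
Set Implicit Arguments. Unset Strict Implicit. Unset Printing Implicit Defensive.
Import Order.TTheory GRing.Theory Num.Theory.
Local Open Scope ring_scope.
Local Open Scope classical_set_scope.

Section Defs.
Variable R : realType.

Definition p (u : R * R) : R := u.1.
Definition q (u : R * R) : R := u.2.

Definition is_array (a1 a2 a3 : R * R) : Prop :=
  a1 <> a2 /\ a2 <> a3 /\
  ((q a1 = q a2 /\ p a2 = p a3) \/ (p a1 = p a2 /\ q a2 = q a3)).

Definition no_array (K : set (R * R)) : Prop :=
  forall a1 a2 a3, K a1 -> K a2 -> K a3 -> ~ is_array a1 a2 a3.

Definition mesh (n : nat) : R := (2%:R ^+ n)^-1.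

Definition vertex (K : set (R * R)) (n : nat) (u : R * R) : Prop :=
  exists i j : int,
    u = (i%:~R * mesh n, j%:~R * mesh n) /\
    exists x, K x /\
      i%:~R * mesh n <= p x < (i + 1)%:~R * mesh n /\
      j%:~R * mesh n <= q x < (j + 1)%:~R * mesh n.

Definition edge (K : set (R * R)) (n : nat) (u1 u2 : R * R) : Prop :=
  vertex K n u1 /\ vertex K n u2 /\ u1 <> u2 /\
  (`|p u1 - p u2| <= mesh n \/ `|q u1 - q u2| <= mesh n).

Definition is_path (K : set (R * R)) (n : nat) (u : nat -> R * R) (k : nat) : Prop :=
  (forall i, (i <= k)%N -> vertex K n (u i)) /\
  (forall i j, (i <= k)%N -> (j <= k)%N -> u i = u j -> i = j) /\
  (forall i, (i < k)%N -> edge K n (u i) (u i.+1)).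

End Defs.

(* Main.v *)
Require Import Defs.
From HB Require Import structures.
From mathcomp Require Import all_boot all_order all_algebra.
From mathcomp Require Import all_classical all_reals all_analysis.
From mathcomp Require Import lra.
Import Order.TTheory GRing.Theory Num.Theory.
Local Open Scope ring_scope.
Local Open Scope classical_set_scope.
Section C.
Variable R : realType.
Implicit Types (K : set (R^o * R^o)).

Lemma comb_aux K : no_array K -> forall k (a : R * R) (c : nat -> R * R),
  K a -> (forall i, (i <= k)%N -> K (c i)) -> q a = q (c 0%N) -> a <> c 0%N ->
  (forall j, (j < k)%N -> p (c j) = p (c j.+1) \/ q (c j) = q (c j.+1)) ->
  (0 < k)%N -> q (c k.-1) <> q (c k) -> False.
Proof.
move=> noK; elim=> [//|k IH] a c Ka Kc qa ac al _ lst.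
have Kc0 : K (c 0%N) by apply: Kc.
have Kc1 : K (c 1%N) by apply: Kc.
have al' : forall j, (j < k)%N -> p (c j.+1) = p (c j.+2) \/ q (c j.+1) = q (c j.+2).
  by move=> j hj; apply: al.
have Kc' : forall i, (i <= k)%N -> K (c i.+1) by move=> i hi; apply: Kc.
case: (eqVneq (c 0%N) (c 1%N)) => [e01|n01].
  destruct k as [|k].
    by apply: lst; rewrite /= e01.
  apply: (IH a (fun i => c i.+1)) => //; rewrite -?e01 //.
case: (eqVneq (q (c 0%N)) (q (c 1%N))) => [q01|nq01].
  destruct k as [|k].
    by apply: lst.
  apply: (IH (c 0%N) (fun i => c i.+1)) => //; exact/eqP.
have [p01|q01] := al 0%N isT; last by move: nq01; rewrite q01 eqxx.
apply: (noK a (c 0%N) (c 1%N)) => //.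
split => //; split; [exact/eqP|by left].
Qed.

Lemma comb K : no_array K -> forall k (c : nat -> R * R),
  (forall i, (i <= k)%N -> K (c i)) ->
  (forall j, (j < k)%N -> p (c j) = p (c j.+1) \/ q (c j) = q (c j.+1)) ->
  (0 < k)%N -> p (c 0%N) <> p (c 1%N) -> q (c k.-1) <> q (c k) -> False.
Proof.
move=> noK [//|k] c Kc al _ np lst.
have [//|q01] := al 0%N isT.
destruct k as [|k]; first by apply: lst.
apply: (@comb_aux K noK k.+1 (c 0%N) (fun i => c i.+1)) => //.
- exact: Kc.
- by move=> i hi; apply: Kc.
- by move=> e; apply: np; rewrite e.
- by move=> j hj; apply: al.
Qed.
End C.

Section S.
Variable R : realType.
Import ArrowAsProduct.
Definition Ch (k : nat) := 'I_k.+1 -> (R^o * R^o).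
Definition cn k (c : Ch k) (j : nat) : R * R := c (inord j).
Arguments cn {k}.
Definition F k (a : R) (c : Ch k) : R^o :=
  \sum_(j < k) Num.min `|p (cn c j) - p (cn c j.+1)| `|q (cn c j) - q (cn c j.+1)|
  + Num.max 0 (a - `|p (cn c 0) - p (cn c 1)|) + Num.max 0 (a - `|q (cn c k.-1) - q (cn c k)|).

Lemma fst_cont : continuous (@fst R^o R^o).
Proof. move=> x; exact: cvg_fst. Qed.
Lemma snd_cont : continuous (@snd R^o R^o).
Proof. move=> x; exact: cvg_snd. Qed.
Lemma evp_cont k (j : nat) : continuous (fun c : Ch k => p (cn c j) : R^o).
Proof. move=> c; apply: (@continuous_comp _ _ _ (fun c : Ch k => c (inord j)) fst).
  exact: (@proj_continuous _ (fun _ => (R^o * R^o)%type)).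
  exact: fst_cont.
Qed.
Lemma evq_cont k (j : nat) : continuous (fun c : Ch k => q (cn c j) : R^o).
Proof. move=> c; apply: (@continuous_comp _ _ _ (fun c : Ch k => c (inord j)) snd).
  exact: (@proj_continuous _ (fun _ => (R^o * R^o)%type)).
  exact: snd_cont.
Qed.
Lemma dist_cont k (f g : Ch k -> R^o) : continuous f -> continuous g ->
  continuous (fun c => `|f c - g c| : R^o).
Proof.
move=> cf cg c; apply: (@continuous_comp _ _ _ (fun c => f c - g c) (Num.norm : R^o -> R^o)).
  exact: (continuousB (cf c) (cg c)).
exact: norm_continuous.
Qed.
Lemma sum_cont k m (g : nat -> Ch k -> R^o) : (forall j, continuous (g j)) ->
  continuous (fun c => \sum_(j < m) g j c).
Proof.
move=> cg; elim: m => [|m IH].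
  have -> : (fun c => \sum_(j < 0) g j c) = (fun=> 0) by apply: funext => c; rewrite big_ord0.
  exact: cst_continuous.
have -> : (fun c => \sum_(j < m.+1) g j c) = (fun c => \sum_(j < m) g j c) + g m.
  by apply: funext => c; rewrite big_ord_recr.
move=> c; apply: continuousD; [exact: IH|exact: cg].
Qed.
Lemma F_cont k a : continuous (F k a).
Proof.
have h1 : continuous (fun c : Ch k => \sum_(j < k) Num.min `|p (cn c j) - p (cn c j.+1)| `|q (cn c j) - q (cn c j.+1)| : R^o).
  apply: (@sum_cont k k (fun j (c : Ch k) => Num.min `|p (cn c j) - p (cn c j.+1)| `|q (cn c j) - q (cn c j.+1)| : R^o)) => j.
  move=> c'; apply: (@continuous_min _ _ (fun c => `|p (cn c j) - p (cn c j.+1)|) (fun c => `|q (cn c j) - q (cn c j.+1)|)).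
  + by apply: dist_cont; apply: evp_cont.
  + by apply: dist_cont; apply: evq_cont.
have h2 : continuous (fun c : Ch k => Num.max 0 (a - `|p (cn c 0) - p (cn c 1)|) : R^o).
  move=> c; apply: (@continuous_max _ _ (fun=> 0) (fun c => a - `|p (cn c 0) - p (cn c 1)|)).
  + exact: cst_continuous.
  + apply: (@continuousB _ R^o _ (fun=> a) (fun c : Ch k => `|p (cn c 0) - p (cn c 1)| : R^o)); first exact: cst_continuous. exact: (@dist_cont k _ _ (evp_cont k 0) (evp_cont k 1) c).
have h3 : continuous (fun c : Ch k => Num.max 0 (a - `|q (cn c k.-1) - q (cn c k)|) : R^o).
  move=> c; apply: (@continuous_max _ _ (fun=> 0) (fun c => a - `|q (cn c k.-1) - q (cn c k)|)).
  + exact: cst_continuous.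
  + apply: (@continuousB _ R^o _ (fun=> a) (fun c : Ch k => `|q (cn c k.-1) - q (cn c k)| : R^o)); first exact: cst_continuous. exact: (@dist_cont k _ _ (evq_cont k k.-1) (evq_cont k k) c).
move=> c; exact: (continuousD (continuousD (h1 c) (h2 c)) (h3 c)).
Qed.
Lemma F_ge0 k a (c : Ch k) : 0 <= F k a c.
Proof.
rewrite /F; apply: addr_ge0; first apply: addr_ge0.
- by apply: sumr_ge0 => j _; rewrite le_min !normr_ge0.
- by rewrite le_max lexx.
- by rewrite le_max lexx.
Qed.

Lemma eps_k (K : set (R^o * R^o)) : compact K -> forall k a, 
  (forall c : Ch k, (forall i, K (c i)) -> F k a c <> 0) ->
  exists2 e : R, 0 < e & forall c : Ch k, (forall i, K (c i)) -> e <= F k a c.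
Proof.
move=> cK k a nz.
set KK := [set c : Ch k | forall i, K (c i)].
have cKK : compact KK.
  exact: (@tychonoff _ (fun _ : 'I_k.+1 => (R^o * R^o)%type) (fun _ => K)).
have cI : compact (F k a @` KK).
  apply: continuous_compact => //; apply: continuous_subspaceT; exact: F_cont.
have clI : closed (F k a @` KK) by apply: compact_closed => //; exact: norm_hausdorff.
have : nbhs (0 : R^o) (~` (F k a @` KK)).
  apply: open_nbhs_nbhs; split; first exact: closed_openC.
  by move=> [c Kc Fc]; apply: (nz c Kc).
move=> /nbhs_ballP [e e0 He]; exists e => // c Kc.
rewrite leNgt; apply/negP => Fe.
apply: (He (F k a c)); last by exists c.
by rewrite -ball_normE /= sub0r normrN ger0_norm ?F_ge0.
Qed.
End S.
Arguments cn {R k}. Arguments F {R}.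
Section T.
Variable R : realType.
Lemma F_nz (K : set (R^o * R^o)) : no_array K -> forall k a, (0 < k)%N -> 0 < a ->
  forall c : Ch R k, (forall i, K (c i)) -> F k a c <> 0.
Proof.
move=> noK k a k0 a0 c Kc F0.
have S0 : 0 <= \sum_(j < k) Num.min `|p (cn c j) - p (cn c j.+1)| `|q (cn c j) - q (cn c j.+1)|.
  by apply: sumr_ge0 => j _; rewrite le_min !normr_ge0.
have M0 : forall x : R, 0 <= Num.max 0 x by move=> x; rewrite le_max lexx.
move: F0; rewrite /F => /eqP; rewrite paddr_eq0 ?addr_ge0 // paddr_eq0 //.
case/andP => /andP [/eqP Ss /eqP m1 /eqP m2].
have al : forall j : 'I_k, Num.min `|p (cn c j) - p (cn c j.+1)| `|q (cn c j) - q (cn c j.+1)| = 0.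
  by move=> j; apply: (psumr_eq0P _ Ss) => // i _; rewrite le_min !normr_ge0.
apply: (@comb R K noK k (cn c)) => //.
- by move=> i _; apply: Kc.
- move=> j hj; have := al (Ordinal hj) => /= /eqP.
  rewrite minEle; case: ifP => _; rewrite normr_eq0 subr_eq0 => /eqP ->; by [left|right].
- move=> e; move: m1; rewrite e subrr normr0 subr0 maxEle (ltW a0) => a0'.
  by move: a0; rewrite a0' ltxx.
- move=> e; move: m2; rewrite e subrr normr0 subr0 maxEle (ltW a0) => a0'.
  by move: a0; rewrite a0' ltxx.
Qed.
End T.

Section G.
Variable R : realType.
Lemma mesh_gt0 n : 0 < mesh R n.
Proof. by rewrite /mesh invr_gt0 exprn_gt0. Qed.
Lemma mesh_small (d : R) : 0 < d -> exists n0, forall n, (n0 <= n)%N -> mesh R n < d.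
Proof.
move=> d0; exists (Num.trunc d^-1).+1 => n hn.
have h1 : d^-1 < n%:R.
  rewrite -truncn_lt_nat ?invr_ge0 ?ltW //.
have h2 : (n%:R : R) < 2%:R ^+ n by rewrite -natrX ltr_nat ltn_expl.
rewrite /mesh -(invrK d) ltf_pV2 ?posrE ?exprn_gt0 ?invr_gt0 //.
exact: lt_trans h1 h2.
Qed.
Lemma vertex_near (K : set (R^o * R^o)) n u : vertex K n u ->
  exists x, K x /\ `|p u - p x| <= mesh R n /\ `|q u - q x| <= mesh R n.
Proof.
move=> [i [j [-> [x [Kx [/andP [px1 px2] /andP [qx1 qx2]]]]]]].
exists x; split => //; rewrite /p /q /= in px1 px2 qx1 qx2 *.
rewrite !intrD !mulrDl !mul1r in px2 qx2.
split; rewrite distrC ger0_norm ?subr_ge0 // lerBlDl ltW //.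
Qed.
End G.

Section M.
Variable R : realType.
Lemma eps_l (K : set (R^o * R^o)) : compact K -> no_array K -> forall a : R, 0 < a ->
  forall l, exists2 e : R, 0 < e & forall k, (0 < k)%N -> (k <= l)%N ->
    forall c : Ch R k, (forall i, K (c i)) -> e <= F k a c.
Proof.
move=> cK noK a a0; elim=> [|l [e1 e10 H1]].
  by exists 1 => // k k0 kl; move: (leq_trans k0 kl).
have [e2 e20 H2] := @eps_k R K cK l.+1 a (@F_nz R K noK l.+1 a isT a0).
exists (Num.min e1 e2); first by rewrite lt_min e10 e20.
move=> k k0; rewrite leq_eqVlt => /orP [/eqP ->|kl] c Kc.
  by rewrite ge_min (H2 c Kc) orbT.
by rewrite ge_min (H1 k k0 kl c Kc).
Qed.

Lemma tri (x y z w : R) : `|x - w| <= `|x - y| + `|y - z| + `|z - w|.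
Proof.
apply: (le_trans (ler_distD y x w)); rewrite -addrA lerD2l; exact: ler_distD.
Qed.
End M.

Theorem mainTheorem2 (R : realType) (K : set (R^o * R^o)) :
  compact K -> no_array K ->
  forall (l : nat) (alpha : R), 0 < alpha ->
  exists n0 : nat, forall n : nat, (n0 <= n)%N ->
    forall (u : nat -> R * R) (k : nat),
      (0 < k)%N ->
      is_path K n u k ->
      alpha <= `|p (u 0%N) - p (u 1%N)| ->
      alpha <= `|q (u k.-1) - q (u k)| ->
      (l < k)%N.
Proof.
move=> cK noK l alpha alpha0.
have a0 : 0 < alpha / 2 by rewrite divr_gt0.
have [e e0 He] := @eps_l R K cK noK _ a0 l.
set d := Num.min (e / (3 * l.+1)%:R) (alpha / 4).
have d0 : 0 < d by rewrite lt_min !divr_gt0 // ltr0n muln_gt0.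
have [n0 Hn0] := @mesh_small R d d0.
exists n0 => n hn u k k0 [Hv [_ Hed]] h1 h2.
rewrite ltnNge; apply/negP => kl.
set m := mesh R n.
have md : m < d := Hn0 n hn.
have m0 : 0 < m := mesh_gt0 R n.
have [c Hc] := choice (fun i : 'I_k.+1 => @vertex_near R K n (u i) (Hv i (ltn_ord i))).
have Hx : forall j, (j <= k)%N -> K (cn c j) /\ `|p (u j) - p (cn c j)| <= m /\ `|q (u j) - q (cn c j)| <= m.
  by move=> j hj; have := Hc (inord j); rewrite /cn inordK.
have Kc : forall i, K (c i) by move=> i; case: (Hc i).
have := He k k0 kl c Kc.
have step : forall j, (j < k)%N -> Num.min `|p (cn c j) - p (cn c j.+1)| `|q (cn c j) - q (cn c j.+1)| <= 3%:R * m.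
  move=> j hj.
  have [_ [pj qj]] := Hx j (ltnW hj).
  have [_ [pj1 qj1]] := Hx j.+1 hj.
  have [_ [_ [_ ed]]] := Hed j hj.
  rewrite ge_min; apply/orP; case: ed => ed; [left|right].
  - apply: (le_trans (@tri R _ (p (u j)) (p (u j.+1)) _)).
    rewrite (distrC (p (cn c j))).
    have -> : (3%:R * m : R) = m + m + m by rewrite mulr_natl !mulrS mulr0n addr0 addrA.
    by apply: lerD; [apply: lerD|].
  - apply: (le_trans (@tri R _ (q (u j)) (q (u j.+1)) _)).
    rewrite (distrC (q (cn c j))).
    have -> : (3%:R * m : R) = m + m + m by rewrite mulr_natl !mulrS mulr0n addr0 addrA.
    by apply: lerD; [apply: lerD|].
have S : \sum_(j < k) Num.min `|p (cn c j) - p (cn c j.+1)| `|q (cn c j) - q (cn c j.+1)| <= (3%:R * m) *+ k.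
  rewrite -[k in _ *+ k]card_ord -sumr_const.
  by apply: ler_sum => j _; apply: step.
have m4 : m <= alpha / 4 by apply: ltW; apply: (lt_le_trans md); rewrite ge_min lexx orbT.
have me : m * (3 * l.+1)%:R < e.
  rewrite -ltr_pdivlMr ?ltr0n ?muln_gt0 //; apply: (lt_le_trans md).
  by rewrite ge_min lexx.
have M1 : Num.max 0 (alpha / 2 - `|p (cn c 0) - p (cn c 1)|) = 0.
  apply/max_idPl; rewrite subr_le0.
  have [_ [p0 _]] := Hx 0%N isT.
  have [_ [p1 _]] := Hx 1%N k0.
  have h := le_trans h1 (@tri R (p (u 0%N)) (p (cn c 0)) (p (cn c 1)) (p (u 1%N))).
  rewrite (distrC (p (cn c 1))) in h.
  lra.
have M2 : Num.max 0 (alpha / 2 - `|q (cn c k.-1) - q (cn c k)|) = 0.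
  apply/max_idPl; rewrite subr_le0.
  have [_ [_ p0]] := Hx k.-1 (leq_pred k).
  have [_ [_ p1]] := Hx k (leqnn k).
  have h := le_trans h2 (@tri R (q (u k.-1)) (q (cn c k.-1)) (q (cn c k)) (q (u k))).
  rewrite (distrC (q (cn c k))) in h.
  lra.
rewrite /F M1 M2 !addr0 => eF.
have hk : (k%:R : R) <= l%:R by rewrite ler_nat.
move: S; rewrite -mulr_natl => S.
move: me; rewrite natrM -addn1 natrD => me.
nra.
Qed.
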